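(* Let $M\in\{0,1\}^{m\times n}$ be the incidence matrix of a simple graph, let $c\in\mathbb Z^n$, and let $r\in\mathbb Z^m$. Let $z^{(1)},\dots,z^{(\ell)}\in\mathbb Z^m$ with $z^{(k)}\equiv r\pmod 2$ for all $k$. Let $\lambda^{(1)},\dots,\lambda^{(\ell)}\ge0$ be reals with $\sum_k\lambda^{(k)}=1$, and suppose $z:=\sum_k\lambda^{(k)}z^{(k)}$ is an integer vector with $z\equiv r\pmod2$. Then \[ f_{c,M}(z)\le\sum_{k\in[\ell]}\lambda^{(k)}f_{c,M}(z^{(k)}). \]
   Context: $f_{c,M}(z)=\min\{c^\top x\mid Mx=z,\ x\in\mathbb Z^n_{\ge0}\}$, with value $\infty$ if infeasible. This is the minimum cost of a perfect $z$-matching of the graph. Congruence modulo $2$ of vectors is componentwise. *)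

(* Defs.v *)
From HB Require Import structures.
From mathcomp Require Import all_boot all_order all_algebra.
From mathcomp Require Import all_classical all_reals ereal.
Set Implicit Arguments. Unset Strict Implicit. Unset Printing Implicit Defensive.
Import Order.TTheory GRing.Theory Num.Theory.
Local Open Scope ring_scope.

(* M (m rows = vertices, n columns = edges) is the vertex-edge incidence
   matrix of a simple graph: 0/1 entries, every column has exactly two ones
   (an edge has two distinct endpoints), and no two columns coincide
   (no parallel edges). *)
Definition is_simple_incidence_matrix (m n : nat) (M : 'M[int]_(m, n)) : Prop :=
  (forall i j, M i j = 0 \/ M i j = 1) /\
  (forall j, \sum_(i < m) M i j = 2) /\
  (forall j j', j != j' -> col j M != col j' M).

(* Written as an infimum in the extended reals (the feasible set is finite
   for an incidence matrix, so the infimum is the minimum; inf of the empty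
   set is +oo). *)
Definition fcM (R : realType) (m n : nat) (c : 'cV[int]_n) (M : 'M[int]_(m, n))
  (z : 'cV[int]_m) : \bar R :=
  ereal_inf [set ((((c^T *m x) 0 0)%:~R : R)%:E) | x in
     [set x : 'cV[int]_n | M *m x = z /\ (forall j, 0 <= x j 0)]]%classic.

(* Main.v *)
Require Import Defs.
From HB Require Import structures.
From mathcomp Require Import all_boot all_order all_algebra.
From mathcomp Require Import all_classical all_reals ereal.
From mathcomp Require Import zify ring lra.
Import Order.TTheory GRing.Theory Num.Theory.
Local Open Scope ring_scope.

Module LemmaSevenProof.
Set Implicit Arguments. Unset Strict Implicit. Unset Printing Implicit Defensive.

Section Core.
Variables (V X : finType).
Definition pEnd := (V * bool)%type.
Definition pEdge := (X * (pEnd * pEnd))%type.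

Definition ew (t : pEnd) (v : V) : int := (t.1 == v)%:R.
Definition sgnb (c : bool) : int := if c then 1 else -1.
Definition sew (t : pEnd) (v : V) : int := (t.1 == v)%:R * sgnb t.2.
Definition ucnt (x : pEdge) v := ew x.2.1 v + ew x.2.2 v.
Definition scnt (x : pEdge) v := sew x.2.1 v + sew x.2.2 v.
Definition udeg (h : pEdge -> int) v := \sum_x h x * ucnt x v.
Definition sdeg (h : pEdge -> int) v := \sum_x h x * scnt x v.
Definition msz (h : pEdge -> int) := \sum_x h x.
Definition ind (e x : pEdge) : int := (x == e)%:R.

Lemma sum_ind (F : pEdge -> int) e : \sum_x ind e x * F x = F e.
Proof.
rewrite (bigD1 e) //= /ind eqxx mul1r big1 ?addr0 // => x /negbTE ->.
by rewrite mul0r.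
Qed.

Lemma sum_ind1 e : \sum_x ind e x = 1.
Proof. by rewrite -(sum_ind (fun _ => 1) e); apply: eq_bigr => x _; rewrite mulr1. Qed.

Lemma sum_upd (h : pEdge -> int) e f g (F : pEdge -> int) :
  \sum_x (h x - ind e x - ind f x + ind g x) * F x
  = \sum_x h x * F x - F e - F f + F g.
Proof.
under eq_bigr do rewrite mulrDl !mulrBl.
by rewrite big_split /= !sumrB !sum_ind.
Qed.

Lemma sum_upd2 (h : pEdge -> int) e f g (F : pEdge -> int) :
  \sum_x (h x - ind g x + ind e x + ind f x) * F x
  = \sum_x h x * F x - F g + F e + F f.
Proof.
under eq_bigr do rewrite !mulrDl mulNr.
by rewrite !big_split /= sumrN !sum_ind.
Qed.

Lemma sum_upd1 (h : pEdge -> int) e (F : pEdge -> int) :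
  \sum_x (h x - ind e x) * F x = \sum_x h x * F x - F e.
Proof.
under eq_bigr do rewrite mulrBl.
by rewrite sumrB sum_ind.
Qed.


Lemma sum_pos_ex (F : pEdge -> int) : 0 < \sum_x F x -> exists x, 0 < F x.
Proof.
move=> h; case: (boolP [exists x, 0 < F x]) => [/existsP//|].
rewrite negb_exists => /forallP H.
have : \sum_x F x <= 0.
  rewrite -oppr_ge0 -sumrN; apply: sumr_ge0 => x _.
  by rewrite oppr_ge0 leNgt; apply: H.
by rewrite leNgt h.
Qed.

Lemma msz0 (m : pEdge -> int) : (forall x, 0 <= m x) -> msz m <= 0 -> forall x, m x = 0.
Proof.
move=> m0 h; have : msz m = 0 by apply/eqP; rewrite eq_le h sumr_ge0.
by move/eqP; rewrite psumr_eq0 // => /allP H x; apply/eqP/H; rewrite mem_index_enum.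
Qed.

Definition othv (j : V) (x : pEdge) := if x.2.1.1 == j then x.2.2 else x.2.1.
Definition touches (j : V) (x : pEdge) := (x.2.1.1 == j) || (x.2.2.1 == j).

Lemma ucnt_oth j x v : touches j x -> ucnt x v = (j == v)%:R + ew (othv j x) v.
Proof.
rewrite /touches /ucnt /othv /ew; case: eqP => [->|_] //=.
by move/eqP->; rewrite addrC.
Qed.

Lemma ucnt_ge0 x v : 0 <= ucnt x v.
Proof. by rewrite /ucnt /ew addr_ge0. Qed.

Lemma udeg_ind e v : udeg (ind e) v = ucnt e v.
Proof. exact: sum_ind. Qed.

Lemma even_cycle N : forall (m : pEdge -> int) i,
  (forall x, 0 <= m x) -> msz m <= N%:Z ->
  (forall v, (2 %| udeg m v)%Z) -> 0 < udeg m i ->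
  exists W : pEdge -> int, (forall x, 0 <= W x <= m x) /\ udeg W i = 2 /\
     forall v, (2 %| udeg W v)%Z.
Proof.
elim: N => [|N IH] m i m0 szN ev pos.
  move: pos; rewrite /udeg big1 ?ltxx // => x _.
  by rewrite (msz0 m0 szN) mul0r.
have splitp : forall e f j, j != i -> touches j e -> touches j f ->
    ucnt e j = 1 -> ucnt f j = 1 ->
    1 <= m e -> 1 <= m f -> (e == f -> 2 <= m e) ->
    exists W : pEdge -> int, (forall x, 0 <= W x <= m x) /\ udeg W i = 2 /\
     forall v, (2 %| udeg W v)%Z.
  move=> e f j ji te tf ue uf me mf ef.
  pose g : pEdge := (e.1, (othv j e, othv j f)).
  pose m' x := m x - ind e x - ind f x + ind g x.
  have m'0 : forall x, 0 <= m' x.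
    move=> x; rewrite /m' /ind.
    have := m0 x; case: (eqVneq x e) => [xe|xe]; case: (eqVneq x f) => [xf|xf] /=.
    - subst x; subst f; move: ef; rewrite eqxx => /(_ isT); case: (_ == g) => /=; lia.
    - by subst x; case: (_ == g) => /=; lia.
    - by subst x; case: (_ == g) => /=; lia.
    - by case: (_ == g) => /=; lia.
  have degm' : forall v, udeg m' v = udeg m v - 2 * (j == v)%:R.
    move=> v; rewrite /udeg /m' sum_upd -/(udeg m v).
    rewrite (ucnt_oth v te) (ucnt_oth v tf) /ucnt /g /=; ring.
  have [W [W1 [W2 W3]]] : exists W : pEdge -> int, (forall x, 0 <= W x <= m' x) /\ udeg W i = 2 /\
     forall v, (2 %| udeg W v)%Z.
    apply: IH => //.
    - rewrite /msz /m' big_split /= sumrB sumrB !sum_ind1 -/(msz m).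
      by move: szN; rewrite -!natz; lia.
    - move=> v; rewrite degm'; apply: rpredB => //; apply: dvdz_mulr; exact: dvdzz.
    - by rewrite degm' (negbTE ji) mulr0 subr0.
  have [Wg|Wg] := leP (W g) 0.
    exists W; split => // x; have := W1 x; rewrite /m' /ind.
    case: (eqVneq x g) => [->|xg]; first by have := W1 g; have := m0 g; lia.
    by rewrite /= addr0; case: (_ == e); case: (_ == f) => /=; lia.
  exists (fun x => W x - ind g x + ind e x + ind f x); split; [|split].
  - move=> x; have := W1 x; rewrite /m' /ind.
    by case: (eqVneq x g) => [->|xg]; case: (_ == e); case: (_ == f) => /=; lia.
  - have -> : udeg (fun x => W x - ind g x + ind e x + ind f x) i
            = udeg W i - ucnt g i + ucnt e i + ucnt f i.
      exact: sum_upd2.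
    rewrite W2 (ucnt_oth i te) (ucnt_oth i tf) /ucnt /g /= (negbTE ji) /=; ring.
  - move=> v.
    have -> : udeg (fun x => W x - ind g x + ind e x + ind f x) v
            = udeg W v - ucnt g v + ucnt e v + ucnt f v.
      exact: sum_upd2.
    rewrite (ucnt_oth v te) (ucnt_oth v tf) /ucnt /g /=.
    have -> : udeg W v - (ew (othv j e) v + ew (othv j f) v) + ((j == v)%:R + ew (othv j e) v) +
      ((j == v)%:R + ew (othv j f) v) = udeg W v + 2 * (j == v)%:R by ring.
    by apply: rpredD => //; apply: dvdz_mulr; exact: dvdzz.
case: (boolP [exists x, [&& 0 < m x, x.2.1.1 == x.2.2.1 & x.2.1.1 != i]]).
  move/existsP => [x /and3P[mx lp ni]].
  pose m' y := m y - ind x y.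
  have m'0 : forall y, 0 <= m' y.
    move=> y; rewrite /m' /ind; have := m0 y.
    by case: (eqVneq y x) => [->|] /=; lia.
  have degm' : forall v, udeg m' v = udeg m v - 2 * (x.2.1.1 == v)%:R.
    move=> v; rewrite /udeg /m' sum_upd1 -/(udeg m v) /ucnt /ew -(eqP lp); ring.
  have [W [W1 [W2 W3]]] : exists W : pEdge -> int, (forall y, 0 <= W y <= m' y) /\ udeg W i = 2 /\ forall v, (2 %| udeg W v)%Z.
    apply: IH => //.
    - rewrite /msz /m' sumrB sum_ind1 -/(msz m).
      by move: szN; rewrite -!natz; lia.
    - move=> v; rewrite degm'; apply: rpredB => //; apply: dvdz_mulr; exact: dvdzz.
    - by rewrite degm' (negbTE ni) /= mulr0 subr0.
  exists W; split => // y; have := W1 y; rewrite /m' /ind.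
  by case: (_ == x) => /=; lia.
rewrite negb_exists => /forallP nc1.
case: (boolP [exists x, (0 < m x) && ((x.2.1.1 != i) || (x.2.2.1 != i))]).
  move/existsP => [x /andP[mx hx]].
  pose j := if x.2.1.1 != i then x.2.1.1 else x.2.2.1.
  have ji : j != i by rewrite /j; case: ifP => //; move: hx; case: (_ != i).
  have tx : touches j x by rewrite /touches /j; case: ifP => _; rewrite eqxx ?orbT.
  have nl : forall y, 0 < m y -> touches j y -> ucnt y j = 1.
    move=> y my; have := nc1 y; rewrite my /= /touches /ucnt /ew.
    case: (eqVneq y.2.1.1 j) => [e1|e1]; case: (eqVneq y.2.2.1 j) => [e2|e2].
    all: rewrite ?e1 ?e2 ?eqxx ?ji //=.
  have u0 : forall y, ~~ touches j y -> ucnt y j = 0.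
    move=> y; rewrite /touches /ucnt /ew negb_or => /andP[/negbTE -> /negbTE ->].
    by rewrite addr0.
  have [m2|m1] := leP 2 (m x).
    apply: (splitp x x j) => //; rewrite ?nl //; lia.
  have mx1 : m x = 1 by lia.
  have evj : (2 %| udeg m j)%Z := ev j.
  have hrest : 0 < \sum_(y | y != x) m y * ucnt y j.
    move: evj; rewrite /udeg (bigD1 x) //= mx1 nl // mul1r.
    have : 0 <= \sum_(y | y != x) m y * ucnt y j.
      by apply: sumr_ge0 => y _; apply: mulr_ge0 => //; exact: ucnt_ge0.
    rewrite le0r => /orP[/eqP->|//]; by rewrite addr0.
  have [y /andP[yx ypos]] : exists y, (y != x) && (0 < m y * ucnt y j).
    case: (boolP [exists y, (y != x) && (0 < m y * ucnt y j)]) => [/existsP//|].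
    rewrite negb_exists => /forallP H; move: hrest.
    have : \sum_(y | y != x) m y * ucnt y j <= 0.
      rewrite -oppr_ge0 -sumrN; apply: sumr_ge0 => y yx.
      by have := H y; rewrite yx /= oppr_ge0 leNgt.
    by rewrite leNgt => /negbTE ->.
  have my : 0 < m y.
    have := m0 y; rewrite le0r => /orP[/eqP e|//]; by move: ypos; rewrite e mul0r.
  have ty : touches j y.
    apply/negP => /negP /u0 e; by move: ypos; rewrite e mulr0.
  apply: (splitp x y j) => //; rewrite ?nl //.
  by rewrite eq_sym (negbTE yx).
rewrite negb_exists => /forallP nc2.
have [x] : exists x, 0 < m x * ucnt x i.
  case: (boolP [exists x, 0 < m x * ucnt x i]) => [/existsP//|].
  rewrite negb_exists => /forallP H; move: pos.
  have : udeg m i <= 0.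
    rewrite -oppr_ge0 -sumrN; apply: sumr_ge0 => y _.
    by have := H y; rewrite oppr_ge0 leNgt.
  by rewrite leNgt => /negbTE ->.
move=> xpos.
have mx : 0 < m x.
  by move: xpos; have := m0 x; rewrite le0r => /orP[/eqP->|//]; rewrite mul0r.
have := nc2 x; rewrite mx /= negb_or !negbK => /andP[/eqP e1 /eqP e2].
exists (ind x); split; [|split].
- move=> y; rewrite /ind; have := m0 y; case: (eqVneq y x) => [->|] /=; lia.
- by rewrite udeg_ind /ucnt /ew e1 e2 eqxx.
- move=> v; rewrite udeg_ind /ucnt /ew e1 e2.
  by case: (i == v) => /=; rewrite ?dvdz0 //.
Qed.

Definition hasEnd (t : pEnd) (x : pEdge) := (x.2.1 == t) || (x.2.2 == t).
Definition oth (t : pEnd) (x : pEdge) := if x.2.1 == t then x.2.2 else x.2.1.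

Lemma scnt_oth t x v : hasEnd t x -> scnt x v = sew t v + sew (oth t x) v.
Proof.
rewrite /hasEnd /scnt /oth; case: eqP => [->|_] //=.
by move/eqP->; rewrite addrC.
Qed.

Lemma sdeg_upd2 (W : pEdge -> int) e f g v :
  sdeg (fun x => W x - ind g x + ind e x + ind f x) v
  = sdeg W v - scnt g v + scnt e v + scnt f v.
Proof. exact: sum_upd2. Qed.

Lemma ucnt_scnt_even x v : (2 %| ucnt x v - scnt x v)%Z.
Proof.
rewrite /ucnt /scnt /ew /sew.
have -> : (x.2.1.1 == v)%:R + (x.2.2.1 == v)%:R -
   ((x.2.1.1 == v)%:R * sgnb x.2.1.2 + (x.2.2.1 == v)%:R * sgnb x.2.2.2)
  = (x.2.1.1 == v)%:R * (1 - sgnb x.2.1.2) + (x.2.2.1 == v)%:R * (1 - sgnb x.2.2.2) :> int by ring.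
apply: rpredD; apply: dvdz_mull; rewrite /sgnb; case: ifP => _;
  rewrite ?subrr ?dvdz0 //; by rewrite opprK; apply/dvdzP; exists 1.
Qed.

Lemma scnt_le_ucnt x v : scnt x v <= ucnt x v.
Proof.
rewrite /ucnt /scnt /ew /sew /sgnb.
by apply: lerD; case: (_ == v); case: ifP => _ /=; rewrite ?mul1r ?mul0r //.
Qed.

Lemma pure_pos (m : pEdge -> int) v :
  (forall x, 0 < m x -> ~~ hasEnd (v, false) x) ->
  forall x, 0 < m x -> scnt x v = ucnt x v.
Proof.
move=> H x /H; rewrite /hasEnd /scnt /ucnt /sew /ew /sgnb negb_or => /andP[h1 h2].
congr (_ + _).
  case: (eqVneq x.2.1.1 v) h1 => [e|]; last by rewrite mul0r.
  by case: x.2.1 e => a [] //= ->; rewrite eqxx.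
case: (eqVneq x.2.2.1 v) h2 => [e|]; last by rewrite mul0r.
by case: x.2.2 e => a [] //= ->; rewrite eqxx.
Qed.

Lemma pure_neg (m : pEdge -> int) v :
  (forall x, 0 < m x -> ~~ hasEnd (v, true) x) ->
  forall x, 0 < m x -> scnt x v = - ucnt x v.
Proof.
move=> H x /H; rewrite /hasEnd /scnt /ucnt /sew /ew /sgnb negb_or => /andP[h1 h2].
rewrite opprD; congr (_ + _).
  case: (eqVneq x.2.1.1 v) h1 => [e|]; last by rewrite mul0r oppr0.
  by case: x.2.1 e => a [] //= ->; rewrite eqxx.
case: (eqVneq x.2.2.1 v) h2 => [e|]; last by rewrite mul0r oppr0.
by case: x.2.2 e => a [] //= ->; rewrite eqxx.
Qed.

Definition core_concl (m W : pEdge -> int) i :=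
  (forall x, 0 <= W x <= m x) /\ sdeg W i = 2 /\
  forall v, (2 %| sdeg W v)%Z /\
    ((0 <= sdeg W v <= sdeg m v) \/ (sdeg m v <= sdeg W v <= 0)).

Lemma core N : forall (m : pEdge -> int) i,
  (forall x, 0 <= m x) -> msz m <= N%:Z ->
  (forall v, (2 %| sdeg m v)%Z) -> 0 < sdeg m i ->
  exists W, core_concl m W i.
Proof.
elim: N => [|N IH] m i m0 szN ev pos.
  move: pos; rewrite /sdeg big1 ?ltxx // => x _.
  by rewrite (msz0 m0 szN) mul0r.
case: (boolP [exists x, [&& 0 < m x, x.2.1.1 == x.2.2.1 & x.2.1.2 != x.2.2.2]]).
  move/existsP => [x /and3P[mx lp ni]].
  have sx0 : forall v, scnt x v = 0.
    move=> v; rewrite /scnt /sew -(eqP lp) /sgnb.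
    by case: x.2.1.2 x.2.2.2 ni => [] [] //= _; ring.
  pose m' y := m y - ind x y.
  have m'0 : forall y, 0 <= m' y.
    move=> y; rewrite /m' /ind; have := m0 y.
    by case: (eqVneq y x) => [->|] /=; lia.
  have degm' : forall v, sdeg m' v = sdeg m v.
    by move=> v; rewrite /sdeg /m' sum_upd1 -/(sdeg m v) sx0 subr0.
  have [W [W1 [W2 W3]]] : exists W, core_concl m' W i.
    apply: IH => //.
    - rewrite /msz /m' sumrB sum_ind1 -/(msz m).
      by move: szN; rewrite -!natz; lia.
    - by move=> v; rewrite degm'.
    - by rewrite degm'.
  exists W; split; [|split] => //.
    move=> y; have := W1 y; rewrite /m' /ind.
    by case: (_ == x) => /=; lia.
  by move=> v; rewrite -degm'.
rewrite negb_exists => /forallP nc1.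
case: (boolP [exists e, exists f, exists j,
   [&& 0 < m e, 0 < m f, hasEnd (j, true) e & hasEnd (j, false) f]]).
  move/existsP => [e /existsP [f /existsP [j /and4P[me mf te tf]]]].
  have ef : e != f.
    apply/negP => /eqP efe; move: tf (nc1 e); rewrite -efe me /=.
    move: te; case: e {efe me} => l [[a b] [c d]]; rewrite /hasEnd /= !xpair_eqE.
    case: b; case: d; rewrite /= ?andbT ?andbF ?orbF //=.
      by move=> /eqP-> /eqP->; rewrite eqxx.
    by move=> /eqP-> /eqP->; rewrite eqxx.
  pose g : pEdge := (e.1, (oth (j, true) e, oth (j, false) f)).
  pose m' x := m x - ind e x - ind f x + ind g x.
  have m'0 : forall x, 0 <= m' x.
    move=> x; rewrite /m' /ind.
    have := m0 x; case: (eqVneq x e) => [xe|xe]; case: (eqVneq x f) => [xf|xf] /=.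
    - by subst x; move: ef; rewrite xf eqxx.
    - by subst x; case: (_ == g) => /=; lia.
    - by subst x; case: (_ == g) => /=; lia.
    - by case: (_ == g) => /=; lia.
  have degm' : forall v, sdeg m' v = sdeg m v.
    move=> v; rewrite /sdeg /m' sum_upd -/(sdeg m v).
    rewrite (scnt_oth v te) (scnt_oth v tf) /scnt /g /= /sew /sgnb /=; ring.
  have [W [W1 [W2 W3]]] : exists W, core_concl m' W i.
    apply: IH => //.
    - rewrite /msz /m' big_split /= sumrB sumrB !sum_ind1 -/(msz m).
      by move: szN; rewrite -!natz; lia.
    - by move=> v; rewrite degm'.
    - by rewrite degm'.
  have [Wg|Wg] := leP (W g) 0.
    exists W; split; [|split] => //; last by move=> v; rewrite -degm'.
    move=> x; have := W1 x; rewrite /m' /ind.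
    case: (eqVneq x g) => [->|xg]; first by have := W1 g; have := m0 g; lia.
    by rewrite /= addr0; case: (_ == e); case: (_ == f) => /=; lia.
  have sW : forall v, sdeg (fun x => W x - ind g x + ind e x + ind f x) v = sdeg W v.
    move=> v; rewrite sdeg_upd2.
    rewrite (scnt_oth v te) (scnt_oth v tf) /scnt /g /= /sew /sgnb /=; ring.
  exists (fun x => W x - ind g x + ind e x + ind f x); split; [|split].
  - move=> x; have := W1 x; rewrite /m' /ind.
    by case: (eqVneq x g) => [->|xg]; case: (_ == e); case: (_ == f) => /=; lia.
  - by rewrite sW.
  - by move=> v; rewrite sW -degm'.
rewrite negb_exists => /forallP nc2.
have evu : forall v, (2 %| udeg m v)%Z.
  move=> v; have -> : udeg m v = sdeg m v + \sum_x m x * (ucnt x v - scnt x v).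
    rewrite /udeg /sdeg -big_split /=; apply: eq_bigr => x _; ring.
  apply: rpredD => //; apply: rpred_sum => x _; apply: dvdz_mull.
  exact: ucnt_scnt_even.
have sdu : forall (h : pEdge -> int) v, (forall x, 0 <= h x) -> sdeg h v <= udeg h v.
  move=> h v h0; apply: ler_sum => x _; apply: ler_wpM2l => //.
  exact: scnt_le_ucnt.
have [W [W1 [W2 W3]]] : exists W : pEdge -> int, (forall x, 0 <= W x <= m x) /\
    udeg W i = 2 /\ forall v, (2 %| udeg W v)%Z.
  apply: (even_cycle m0 szN evu).
  exact: (lt_le_trans pos (sdu m i m0)).
have Wm : forall x, W x != 0 -> 0 < m x.
  by move=> x nz; have := W1 x; move: nz; lia.
have W0 : forall x, 0 <= W x by move=> x; case/andP: (W1 x).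
have dich : forall v, (forall x, 0 < m x -> ~~ hasEnd (v, false) x) \/
                      (forall x, 0 < m x -> ~~ hasEnd (v, true) x).
  move=> v; case: (boolP [exists x, (0 < m x) && hasEnd (v, true) x]).
    move/existsP => [e /andP[me te]]; left => f mf; apply/negP => tf.
    by have := nc2 e; rewrite negb_exists => /forallP /(_ f);
       rewrite negb_exists => /forallP /(_ v); rewrite me mf te tf.
  rewrite negb_exists => /forallP H; right => x mx.
  by have := H x; rewrite mx.
have eqdeg : forall (h : pEdge -> int) v (F : pEdge -> int),
    (forall x, h x != 0 -> 0 < m x) -> (forall x, 0 < m x -> scnt x v = F x) ->
    sdeg h v = \sum_x h x * F x.
  move=> h v F hm hF; apply: eq_bigr => x _.
  by case: (eqVneq (h x) 0) => [->|/hm /hF ->]; rewrite ?mul0r.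
have Wm' : forall x, m x != 0 -> 0 < m x.
  by move=> x; have := m0 x; rewrite le0r => /orP[/eqP->|//]; rewrite eqxx.
have caseP : forall v, (forall x, 0 < m x -> ~~ hasEnd (v, false) x) ->
    sdeg W v = udeg W v /\ sdeg m v = udeg m v.
  move=> v H; split; apply: eqdeg => //; exact: pure_pos H.
have caseN : forall v, (forall x, 0 < m x -> ~~ hasEnd (v, true) x) ->
    sdeg W v = - udeg W v /\ sdeg m v = - udeg m v.
  move=> v H; split; rewrite /udeg -sumrN; under eq_bigr do rewrite -mulrN;
    apply: eqdeg => // x mx; exact: (pure_neg H mx).
have uWm : forall v, udeg W v <= udeg m v.
  by move=> v; apply: ler_sum => x _; apply: ler_wpM2r; [exact: ucnt_ge0 | case/andP: (W1 x)].
have uW0 : forall v, 0 <= udeg W v.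
  by move=> v; apply: sumr_ge0 => x _; apply: mulr_ge0 => //; exact: ucnt_ge0.
exists W; split; [|split] => //.
  case: (dich i) => [/caseP [-> _] //|/caseN [_ e]].
  by move: pos; rewrite e oppr_gt0 ltNge; have := uW0 i;
     rewrite /udeg; move=> _; rewrite sumr_ge0 // => x _; apply: mulr_ge0 => //; exact: ucnt_ge0.
move=> v; case: (dich v) => [/caseP [-> ->]|/caseN [-> ->]].
  by split => //; left; rewrite uW0 uWm.
split; first by rewrite rpredN.
by right; rewrite lerN2 oppr_le0 uWm uW0.
Qed.

End Core.

Section Pair.
Variables (m n : nat) (M : 'M[int]_(m, n)) (u w : 'I_n -> 'I_m).
Hypothesis Mdef : forall v j, M v j = (u j == v)%:R + (w j == v)%:R.

Definition degM (A : 'I_n -> int) v := \sum_j M v j * A j.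

Notation E := (pEdge 'I_m 'I_n).
Definition eA j : E := (j, ((u j, true), (w j, true))).
Definition eB j : E := (j, ((u j, false), (w j, false))).

Lemma eA_inj j j' : (eA j == eA j') = (j == j').
Proof.
apply/eqP/eqP => [h|->//]; by case: h.
Qed.
Lemma eB_inj j j' : (eB j == eB j') = (j == j').
Proof. apply/eqP/eqP => [h|->//]; by case: h. Qed.
Lemma eAB j j' : (eA j == eB j') = false.
Proof. by apply/negbTE/eqP => h; case: h. Qed.
Lemma eBA j j' : (eB j == eA j') = false.
Proof. by apply/negbTE/eqP => h; case: h. Qed.

Lemma sum_ord_ind (F : 'I_n -> int) j : \sum_j' (j == j')%:R * F j' = F j.
Proof.
rewrite (bigD1 j) //= eqxx mul1r big1 ?addr0 // => j' /negbTE.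
by rewrite eq_sym => ->; rewrite mul0r.
Qed.

Lemma pair_lemma (A B : 'I_n -> int) i :
  (forall j, 0 <= A j) -> (forall j, 0 <= B j) ->
  (forall v, (2 %| degM A v - degM B v)%Z) -> degM B i < degM A i ->
  exists A' : 'I_n -> int, (forall j, 0 <= A' j <= A j + B j) /\
  exists dW : 'I_m -> int, (forall v, degM A' v = degM A v - dW v) /\ dW i = 2 /\
    forall v, (2 %| dW v)%Z /\
      ((0 <= dW v <= degM A v - degM B v) \/ (degM A v - degM B v <= dW v <= 0)).
Proof.
move=> A0 B0 ev lt.
pose mm (x : E) := \sum_j (ind (eA j) x * A j + ind (eB j) x * B j).
have mm0 : forall x, 0 <= mm x.
  move=> x; apply: sumr_ge0 => j _; apply: addr_ge0; apply: mulr_ge0 => //;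
  by rewrite /ind ler0n.
have mmA : forall j, mm (eA j) = A j.
  move=> j; rewrite /mm -[RHS](sum_ord_ind A j); apply: eq_bigr => j' _.
  by rewrite /ind eA_inj eAB mul0r addr0.
have mmB : forall j, mm (eB j) = B j.
  move=> j; rewrite /mm -[RHS](sum_ord_ind B j); apply: eq_bigr => j' _.
  by rewrite /ind eB_inj eBA mul0r add0r.
have scA : forall j v, scnt (eA j) v = M v j.
  by move=> j v; rewrite Mdef /scnt /sew /= !mulr1.
have scB : forall j v, scnt (eB j) v = - M v j.
  by move=> j v; rewrite Mdef /scnt /sew /=; ring.
have sdegE : forall (h : E -> int), (forall x, h x = \sum_j (ind (eA j) x * h (eA j) + ind (eB j) x * h (eB j))) ->
   forall v, sdeg h v = \sum_j (h (eA j) - h (eB j)) * M v j.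
  move=> h hE v; rewrite /sdeg.
  under eq_bigr do rewrite hE mulr_suml.
  rewrite exchange_big /=; apply: eq_bigr => j _.
  under eq_bigr do rewrite mulrDl -!mulrA.
  rewrite big_split /= !sum_ind scA scB; ring.
have mmE : forall x, mm x = \sum_j (ind (eA j) x * mm (eA j) + ind (eB j) x * mm (eB j)).
  move=> x; have -> : \sum_j (ind (eA j) x * mm (eA j) + ind (eB j) x * mm (eB j))
     = \sum_j (ind (eA j) x * A j + ind (eB j) x * B j).
    by apply: eq_bigr => j _; rewrite mmA mmB.
  by [].
have sdm : forall v, sdeg mm v = degM A v - degM B v.
  move=> v; rewrite (sdegE _ mmE) /degM -sumrB; apply: eq_bigr => j _.
  rewrite mmA mmB; ring.
have [W [W1 [W2 W3]]] : exists W, core_concl mm W i.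
  apply: (@core _ _ `|msz mm|%N) => //.
  - rewrite gez0_abs ?lexx //; exact: sumr_ge0.
  - by move=> v; rewrite sdm.
  - by rewrite sdm subr_gt0.
have WE : forall x, W x = \sum_j (ind (eA j) x * W (eA j) + ind (eB j) x * W (eB j)).
  move=> [l [[a b] [c d]]].
  set x := (l, ((a, b), (c, d))).
  case: (eqVneq x (eA l)) => [xe|xe].
    rewrite {1}xe -[W (eA l)](sum_ord_ind (fun j => W (eA j)) l).
    apply: eq_bigr => j _; by rewrite /ind xe eA_inj eAB mul0r addr0 eq_sym.
  case: (eqVneq x (eB l)) => [xe'|xe'].
    rewrite {1}xe' -[W (eB l)](sum_ord_ind (fun j => W (eB j)) l).
    apply: eq_bigr => j _; by rewrite /ind xe' eB_inj eBA mul0r add0r eq_sym.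
  have nA : forall j, (x == eA j) = false.
    move=> j; apply/negbTE/eqP => h; have lj : l = j by case: h.
    by move: xe; rewrite h -lj eqxx.
  have nB : forall j, (x == eB j) = false.
    move=> j; apply/negbTE/eqP => h; have lj : l = j by case: h.
    by move: xe'; rewrite h -lj eqxx.
  rewrite big1; last by move=> j _; rewrite /ind nA nB !mul0r addr0.
  have : mm x = 0 by rewrite /mm big1 // => j _; rewrite /ind nA nB !mul0r addr0.
  by have := W1 x => /andP[h1 h2] e; apply/eqP; rewrite eq_le h1 -e h2.
pose A' j := A j - W (eA j) + W (eB j).
exists A'; split.
  move=> j; have := W1 (eA j); have := W1 (eB j); rewrite mmA mmB /A'; lia.
exists (sdeg W); split; [|split] => //.
  move=> v; rewrite (sdegE _ WE) /degM -sumrB; apply: eq_bigr => j _.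
  rewrite /A'; ring.
by move=> v; rewrite -sdm; apply: W3.
Qed.

End Pair.

Section LP.
Variables (R : realFieldType) (S K : finType) (row : K -> S -> R) (rhs : K -> R)
  (ok : pred S) (gg : S -> R).

Definition feas (la : S -> R) := (forall s, 0 <= la s) /\ (forall s, ~~ ok s -> la s = 0) /\
  \sum_s la s = 1 /\ forall k, \sum_s la s * row k s = rhs k.
Definition Phi (la : S -> R) := \sum_s la s * gg s.
Definition kern (nu : S -> R) := \sum_s nu s = 0 /\ forall k, \sum_s nu s * row k s = 0.
Definition basic (la : S -> R) := feas la /\
  forall nu, (forall s, la s = 0 -> nu s = 0) -> kern nu -> forall s, nu s = 0.
Definition supp (la : S -> R) := [set s | la s != 0].

Lemma lin_comb (la nu : S -> R) t (F : S -> R) :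
  \sum_s (la s + t * nu s) * F s = \sum_s la s * F s + t * \sum_s nu s * F s.
Proof.
rewrite mulr_sumr -big_split /=; apply: eq_bigr => s _; ring.
Qed.

Lemma lin_comb1 (la nu : S -> R) t :
  \sum_s (la s + t * nu s) = \sum_s la s + t * \sum_s nu s.
Proof.
rewrite mulr_sumr -big_split /=; apply: eq_bigr => s _; ring.
Qed.

Lemma carath N : forall la, feas la -> (#|supp la| <= N)%N ->
  exists la', basic la' /\ Phi la' <= Phi la.
Proof.
elim: N => [|N IH] la fla.
  rewrite leqn0 => /eqP/cards0_eq s0; exfalso.
  case: fla => _ [_ [h _]].
  have : \sum_s la s = 0.
    apply: big1 => s _; apply/eqP/negPn/negP => hs.
    have : s \in supp la by rewrite inE.
    by rewrite s0 inE.
  by rewrite h => /eqP; rewrite oner_eq0.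
move=> szN.
case: (pselect (exists nu, (forall s, la s = 0 -> nu s = 0) /\ kern nu /\ exists s, nu s != 0));
  last first.
  move=> H; exists la; split => //; split => // nu h1 h2 s.
  apply/eqP/negPn/negP => h3; apply: H; exists nu; split => //; split => //; by exists s.
move=> [nu0 [nsupp [[ks kr] [s1 ns1]]]].
pose sg : R := if \sum_s nu0 s * gg s <= 0 then 1 else -1.
pose nu s := sg * nu0 s.
have sg0 : sg != 0 by rewrite /sg; case: ifP => _; rewrite ?oppr_eq0 oner_eq0.
have nuphi : \sum_s nu s * gg s <= 0.
  rewrite /nu; under eq_bigr do rewrite -mulrA; rewrite -mulr_sumr /sg.
  case: ifP => h; first by rewrite mul1r.
  by rewrite mulN1r oppr_le0; move/negbT: h; rewrite -ltNge => /ltW.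
have nusum : \sum_s nu s = 0 by rewrite /nu -mulr_sumr ks mulr0.
have nurow : forall k, \sum_s nu s * row k s = 0.
  by move=> k; rewrite /nu; under eq_bigr do rewrite -mulrA; rewrite -mulr_sumr kr mulr0.
have nusupp : forall s, la s = 0 -> nu s = 0 by move=> s /nsupp; rewrite /nu => ->; rewrite mulr0.
have [s2 neg2] : exists s, nu s < 0.
  case: (boolP [exists s, nu s < 0]) => [/existsP//|].
  rewrite negb_exists => /forallP H.
  have nu0' : forall s, 0 <= nu s by move=> s; rewrite leNgt H.
  have := psumr_eq0P (fun s _ => nu0' s) nusum (i := s1) isT.
  by rewrite /nu => /eqP; rewrite mulf_eq0 (negbTE sg0) (negbTE ns1).
pose F s := la s / - nu s.
have [s0' neg0 mins] : exists2 s, nu s < 0 & forall s', nu s' < 0 -> F s <= F s'.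
  by case: (@arg_minP _ _ _ s2 (fun s => nu s < 0) F neg2) => s ns H; exists s.
have la0 : forall s, 0 <= la s by case: fla.
pose t := F s0'.
have t0 : 0 <= t by rewrite /t /F divr_ge0 // oppr_ge0 ltW.
pose la' s := la s + t * nu s.
have fla' : feas la'.
  case: fla => h1 [h2 [h3 h4]]; split; [|split; [|split]].
  - move=> s; rewrite /la'; case: (ltP (nu s) 0) => ns.
      have := mins s ns; rewrite /F ler_pdivlMr ?oppr_gt0 //.
      rewrite /t /F; nra.
    by apply: addr_ge0 => //; apply: mulr_ge0.
  - by move=> s /h2 h; rewrite /la' h (nusupp _ h) mulr0 addr0.
  - by rewrite lin_comb1 h3 nusum mulr0 addr0.
  - by move=> k; rewrite lin_comb h4 nurow mulr0 addr0.
have phi' : Phi la' <= Phi la.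
  rewrite /Phi lin_comb -[X in _ <= X]addr0 lerD2l.
  by rewrite mulr_ge0_le0.
have sub : supp la' \proper supp la.
  apply/fintype.properP; split.
    apply/fintype.subsetP => s; rewrite !inE; apply: contra => /eqP h.
    by rewrite /la' h (nusupp _ h) mulr0 addr0.
  exists s0'.
    rewrite inE; apply/eqP => h; by move: neg0; rewrite (nusupp _ h) ltxx.
  rewrite inE negbK /la' /t /F; apply/eqP; field.
  by rewrite lt_eqF.
have [la'' [b'' p'']] := IH la' fla' (leq_trans (proper_card sub) szN).
exists la''; split => //; exact: le_trans p'' phi'.
Qed.

Lemma basic_unique la mu : basic la -> feas mu ->
  (forall s, (la s == 0) = (mu s == 0)) -> forall s, la s = mu s.
Proof.
move=> [[_ [_ [l3 l4]]] bl] [_ [_ [m3 m4]]] H s.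
apply/eqP; rewrite -subr_eq0; apply/eqP.
apply: (bl (fun s => la s - mu s)).
- by move=> s' h; move: (H s'); rewrite h eqxx => /esym/eqP ->; rewrite subr0.
- split; first by rewrite sumrB l3 m3 subrr.
  by move=> k; under eq_bigr do rewrite mulrBl; rewrite sumrB l4 m4 subrr.
Qed.

Lemma descent :
  (forall la, feas la -> 0 < Phi la -> exists la', feas la' /\ Phi la' < Phi la) ->
  forall la0, feas la0 -> exists la, feas la /\ Phi la <= 0.
Proof.
move=> step la0 f0.
case: (pselect (exists la, feas la /\ Phi la <= 0)) => // Hn; exfalso.
have pos : forall la, feas la -> 0 < Phi la.
  move=> la fla; rewrite ltNge; apply/negP => h; apply: Hn; by exists la.
pose cset la := [set T : {set S} | `[< exists mu, basic mu /\ supp mu = T /\ Phi mu < Phi la >]].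
suff : forall N la, basic la -> (#|cset la| < N)%N -> False.
  have [la1 [b1 _]] := carath f0 (leqnn _).
  by move/(_ (#|cset la1|.+1) la1 b1 (ltnSn _)).
elim => [|N IH] la bla //.
move=> cN.
have [la2 [f2 p2]] := step la (proj1 bla) (pos _ (proj1 bla)).
have [la3 [b3 p3]] := carath f2 (leqnn _).
have lt3 : Phi la3 < Phi la by exact: le_lt_trans p3 p2.
have sub : cset la3 \proper cset la.
  apply/fintype.properP; split.
    apply/fintype.subsetP => T; rewrite !finset.in_set => /asboolP [mu [bm [sm pm]]].
    apply/asboolP; exists mu; split => //; split => //; exact: lt_trans pm lt3.
  exists (supp la3).
    by rewrite finset.in_set; apply/asboolP; exists la3.
  rewrite finset.in_set; apply/negP => /asboolP [mu [bm [sm pm]]].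
  have e : forall s, mu s = la3 s.
    apply: basic_unique => // [|s]; first exact: proj1 b3.
    have : (s \in supp mu) = (s \in supp la3) by rewrite sm.
    by rewrite !finset.in_set; case: (mu s == 0); case: (la3 s == 0).
  by move: pm; rewrite /Phi; under eq_bigr do rewrite e; rewrite ltxx.
apply: (IH la3 b3); exact: leq_trans (proper_card sub) cN.
Qed.

End LP.

Lemma intr_sumE (R : pzRingType) (I : finType) (F : I -> int) :
  (\sum_i F i)%:~R = \sum_i (F i)%:~R :> R.
Proof. exact: (big_morph _ (@intrD R) (mulr0z 1)). Qed.

Section Main.
Variables (R : realType) (m n : nat) (M : 'M[int]_(m, n)) (c : 'cV[int]_n)
  (r z : 'cV[int]_m) (D : nat) (u w : 'I_n -> 'I_m).
Hypothesis Mdef : forall v j, M v j = (u j == v)%:R + (w j == v)%:R.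
Hypothesis zr : forall v, (z v ord0 == r v ord0 %[mod 2])%Z.

Definition TT := {ffun 'I_n -> 'I_D.+1}.
Definition vT (s : TT) j : int := (s j : nat)%:Z.
Definition dgT (s : TT) v := degM M (vT s) v.
Definition cT (s : TT) : int := \sum_j c j 0 * vT s j.
Definition okT (s : TT) := [forall v, (dgT s v <= D%:Z) && (dgT s v == r v ord0 %[mod 2])%Z].
Definition gT (s : TT) : R := (\sum_v (dgT s v - z v 0) ^+ 2)%:~R.
Definition rowT (k : option 'I_m) (s : TT) : R :=
  match k with None => (cT s)%:~R | Some v => (dgT s v)%:~R end.
Definition rhsT (C0 : R) (k : option 'I_m) : R :=
  match k with None => C0 | Some v => (z v 0)%:~R end.

Lemma vT_ge0 s j : 0 <= vT s j. Proof. by []. Qed.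

Lemma degM_bound (x : 'I_n -> int) : (forall j, 0 <= x j) -> forall j, x j <= degM M x (u j).
Proof.
move=> x0 j; rewrite /degM (bigD1 j) //=.
have : 0 <= \sum_(j' | j' != j) M (u j) j' * x j'.
  apply: sumr_ge0 => j' _; rewrite Mdef; apply: mulr_ge0 => //.
have : 1 <= M (u j) j by rewrite Mdef eqxx; case: (_ == _).
move=> h1 h2; have h3 := ler_wpM2r (x0 j) h1; rewrite mul1r in h3.
apply: le_trans h3 _; by rewrite lerDl.
Qed.

Lemma degM_lin (x y : 'I_n -> int) v : degM M (fun j => x j + y j) v = degM M x v + degM M y v.
Proof. by rewrite /degM -big_split; apply: eq_bigr => j _; rewrite mulrDr. Qed.

Lemma toT (x : 'I_n -> int) : (forall j, 0 <= x j) -> (forall v, degM M x v <= D%:Z) ->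
  exists s : TT, forall j, vT s j = x j.
Proof.
move=> x0 xD; exists [ffun j => inord `|x j|%N] => j.
rewrite /vT ffunE inordK; first by rewrite gez0_abs.
have := degM_bound x0 j; have := xD (u j); have := x0 j.
move=> a b c'; rewrite ltnS -(@ler_nat int) natz gez0_abs //; rewrite natz; exact: le_trans c' b.
Qed.

Lemma sum_dirac (T : finType) (F : T -> R) a : \sum_s (s == a)%:R * F s = F a.
Proof.
rewrite (bigD1 a) //= eqxx mul1r big1 ?addr0 // => s /negbTE ->; by rewrite mul0r.
Qed.

Lemma sq_step (P Q d : int) : (0 <= d <= P - Q) \/ (P - Q <= d <= 0) ->
  (P - d) ^+ 2 + (Q + d) ^+ 2 <= P ^+ 2 + Q ^+ 2.
Proof.
move=> h.
have -> : (P - d) ^+ 2 + (Q + d) ^+ 2 = P ^+ 2 + Q ^+ 2 + 2 * d * (d - (P - Q)) by ring.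
rewrite gerDl; case: h => /andP[h1 h2].
  by apply: mulr_ge0_le0; [apply: mulr_ge0 | rewrite subr_le0].
apply: mulr_le0_ge0; last by rewrite subr_ge0.
by rewrite pmulr_rle0.
Qed.

Lemma sq_strict (P Q : int) : 2 <= P -> Q <= -2 ->
  (P - 2) ^+ 2 + (Q + 2) ^+ 2 < P ^+ 2 + Q ^+ 2.
Proof.
move=> h1 h2.
have -> : (P - 2) ^+ 2 + (Q + 2) ^+ 2 = P ^+ 2 + Q ^+ 2 + 4 * (2 - (P - Q)) by ring.
rewrite -ltrBrDl subrr pmulr_rlt0 //; lia.
Qed.

Lemma betw_le (A B d D0 : int) : A <= D0 -> B <= D0 ->
  ((0 <= d <= A - B) \/ (A - B <= d <= 0)) -> A - d <= D0 /\ B + d <= D0.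
Proof. lia. Qed.

Lemma betwB (A B x : int) : 0 <= x <= A + B -> 0 <= A + B - x.
Proof. lia. Qed.

Lemma even_ge2 (x q : int) : 0 < x -> x = q * 2 -> 2 <= x.
Proof. lia. Qed.

Lemma even_le2 (x q : int) : x < 0 -> x = q * 2 -> x <= -2.
Proof. lia. Qed.

Lemma step C0 la : feas rowT (rhsT C0) okT la -> 0 < Phi gT la ->
  exists la', feas rowT (rhsT C0) okT la' /\ Phi gT la' < Phi gT la.
Proof.
move=> fla pos.
case: (fla) => la0 [lok [lsum lrow]].
have rowdeg : forall v, \sum_s la s * (dgT s v)%:~R = (z v ord0)%:~R := fun v => lrow (Some v).
have rowc : \sum_s la s * (cT s)%:~R = C0 := lrow None.
have g0 : forall s, 0 <= gT s.
  by move=> s; rewrite /gT ler0z; apply: sumr_ge0 => v _; rewrite sqr_ge0.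
have [s1 hs1] : exists s, 0 < la s * gT s.
  case: (pselect (exists s, 0 < la s * gT s)) => // H; exfalso; move: pos.
  rewrite /Phi; apply/negP; rewrite -leNgt; apply: sumr_le0 => s _.
  by rewrite leNgt; apply/negP => h; apply: H; exists s.
have la1 : 0 < la s1.
  by move: hs1; have := la0 s1; rewrite le0r => /orP[/eqP->|//]; rewrite mul0r ltxx.
have gs1 : 0 < gT s1 by move: hs1; rewrite pmulr_rgt0.
have [i hi] : exists i, dgT s1 i != z i ord0.
  case: (pselect (exists i, dgT s1 i != z i ord0)) => // H; exfalso; move: gs1.
  rewrite /gT big1 ?ltxx // => v _.
  have -> : dgT s1 v = z v ord0 by apply/eqP/negPn/negP => h; apply: H; exists v.
  by rewrite subrr expr2 mulr0.
have opp : forall h : TT -> R, \sum_s la s * h s = 0 ->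
    forall a, 0 < la a -> 0 < h a -> exists b, 0 < la b /\ h b < 0.
  move=> h hs a laa ha; case: (pselect (exists b, 0 < la b /\ h b < 0)) => // H; exfalso.
  have : 0 < \sum_s la s * h s.
    rewrite (bigD1 a) //=; apply: ltr_pwDl; first exact: mulr_gt0.
    apply: sumr_ge0 => s _; case: (eqVneq (la s) 0) => [->|ls]; first by rewrite mul0r.
    have ls' : 0 < la s by rewrite lt_neqAle eq_sym ls la0.
    apply: mulr_ge0; first exact: ltW.
    by rewrite leNgt; apply/negP => hb; apply: H; exists s.
  by rewrite hs ltxx.
have sumi : \sum_s la s * ((dgT s i)%:~R - (z i ord0)%:~R) = 0.
  under eq_bigr do rewrite mulrBr.
  by rewrite sumrB rowdeg -mulr_suml lsum mul1r subrr.
have sumi' : \sum_s la s * ((z i ord0)%:~R - (dgT s i)%:~R) = 0.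
  under eq_bigr do rewrite mulrBr.
  by rewrite sumrB rowdeg -mulr_suml lsum mul1r subrr.
have [a [b [laa [lab [ha hb]]]]] : exists a b, 0 < la a /\ 0 < la b /\
    z i ord0 < dgT a i /\ dgT b i < z i ord0.
  case: (ltgtP (dgT s1 i) (z i ord0)) hi => // h _.
    have h' : 0 < ((z i ord0)%:~R - (dgT s1 i)%:~R : R) by rewrite subr_gt0 ltr_int.
    have [b [lb hb]] := opp _ sumi' s1 la1 h'.
    by exists b, s1; move: hb; rewrite subr_lt0 ltr_int.
  have h' : 0 < ((dgT s1 i)%:~R - (z i ord0)%:~R : R) by rewrite subr_gt0 ltr_int.
  have [b [lb hb]] := opp _ sumi s1 la1 h'.
  by exists s1, b; move: hb; rewrite subr_lt0 ltr_int.
have okpos : forall s, 0 < la s -> okT s.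
  by move=> s ls; apply/negPn/negP => /lok h; move: ls; rewrite h ltxx.
have [okA okB] := (okpos a laa, okpos b lab).
have okP : forall s, okT s -> forall v, dgT s v <= D%:Z /\ (2 %| dgT s v - r v ord0)%Z.
  by move=> s /forallP h v; have /andP[h1 h2] := h v; rewrite -eqz_mod_dvd.
have zr' : forall v, (2 %| z v ord0 - r v ord0)%Z by move=> v; rewrite -eqz_mod_dvd.
have par : forall v, (2 %| degM M (vT a) v - degM M (vT b) v)%Z.
  move=> v; have [_ p1] := okP a okA v; have [_ p2] := okP b okB v.
  have -> : degM M (vT a) v - degM M (vT b) v = (dgT a v - r v ord0) - (dgT b v - r v ord0).
    by rewrite /dgT; ring.
  exact: rpredB.
have [A' [A'b [dW [dA' [dWi dWv]]]]] :=
  pair_lemma Mdef (vT_ge0 a) (vT_ge0 b) par (lt_trans hb ha).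
pose B' j := vT a j + vT b j - A' j.
have dB' : forall v, degM M B' v = dgT b v + dW v.
  move=> v; rewrite /degM /B'; under eq_bigr do rewrite mulrBr mulrDr.
  rewrite sumrB big_split /= -/(degM M (vT a) v) -/(degM M (vT b) v) -/(degM M A' v) dA'.
  rewrite /dgT; ring.
have dWb : forall v, (2 %| dW v)%Z /\ ((0 <= dW v <= dgT a v - dgT b v) \/ (dgT a v - dgT b v <= dW v <= 0)).
  exact: dWv.
have [a' ea'] : exists s : TT, forall j, vT s j = A' j.
  apply: toT; first by move=> j; case/andP: (A'b j).
  move=> v; rewrite dA'; have [h _] := okP a okA v; have [h' _] := okP b okB v.
  have [_ hd] := dWb v; by case: (betw_le h h' hd).
have [b' eb'] : exists s : TT, forall j, vT s j = B' j.
  apply: toT; first by move=> j; rewrite /B'; apply: betwB.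
  move=> v; rewrite dB'; have [h _] := okP a okA v; have [h' _] := okP b okB v.
  have [_ hd] := dWb v; by case: (betw_le h h' hd).
have dga' : forall v, dgT a' v = dgT a v - dW v.
  by move=> v; rewrite /dgT -dA' /degM; apply: eq_bigr => j _; rewrite ea'.
have dgb' : forall v, dgT b' v = dgT b v + dW v.
  by move=> v; rewrite -dB' /dgT /degM; apply: eq_bigr => j _; rewrite eb'.
have okA' : okT a'.
  apply/forallP => v; rewrite dga'; have [h p] := okP a okA v; have [h' _] := okP b okB v.
  have [pw hd] := dWb v; apply/andP; split.
    by case: (betw_le h h' hd).
  rewrite eqz_mod_dvd; have -> : dgT a v - dW v - r v ord0 = (dgT a v - r v ord0) - dW v by ring.
  exact: rpredB.
have okB' : okT b'.
  apply/forallP => v; rewrite dgb'; have [h p] := okP b okB v; have [h' _] := okP a okA v.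
  have [pw hd] := dWb v; apply/andP; split.
    by case: (betw_le h' h hd).
  rewrite eqz_mod_dvd; have -> : dgT b v + dW v - r v ord0 = (dgT b v - r v ord0) + dW v by ring.
  exact: rpredD.
have ab : a != b by apply/eqP => e; move: (lt_trans hb ha); rewrite e ltxx.
pose mu := Num.min (la a) (la b).
have mu0 : 0 < mu by rewrite /mu lt_min laa lab.
have mua : mu <= la a by rewrite /mu ge_min lexx.
have mub : mu <= la b by rewrite /mu ge_min lexx orbT.
pose la' s := la s - mu * ((s == a)%:R + (s == b)%:R) + mu * ((s == a')%:R + (s == b')%:R).
have sumE : forall F : TT -> R, \sum_s la' s * F s
    = \sum_s la s * F s - mu * (F a + F b) + mu * (F a' + F b').
  move=> F; rewrite /la'; under eq_bigr do rewrite mulrDl mulrBl -!mulrA !mulrDl.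
  rewrite big_split /= sumrB -!mulr_sumr !big_split /= !sum_dirac //.
have cTlin : cT a' + cT b' = cT a + cT b.
  rewrite /cT -!big_split /=; apply: eq_bigr => j _.
  rewrite ea' eb' /B'; ring.
have gstrict : gT a' + gT b' < gT a + gT b.
  rewrite /gT -!intrD ltr_int -!big_split /=.
  rewrite (bigD1 i) //= [X in _ < X](bigD1 i) //=.
  apply: ltr_leD.
    rewrite dga' dgb' dWi.
    have [_ pa] := okP a okA i; have [_ pb] := okP b okB i; have zi := zr' i.
    have : (2 %| dgT a i - z i ord0)%Z.
      have -> : dgT a i - z i ord0 = (dgT a i - r i ord0) - (z i ord0 - r i ord0) by ring.
      exact: rpredB.
    have : (2 %| dgT b i - z i ord0)%Z.
      have -> : dgT b i - z i ord0 = (dgT b i - r i ord0) - (z i ord0 - r i ord0) by ring.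
      exact: rpredB.
    move=> /dvdzP [q1 e1] /dvdzP [q2 e2].
    have h1 : 2 <= dgT a i - z i ord0 by apply: (even_ge2 _ e2); rewrite subr_gt0.
    have h2 : dgT b i - z i ord0 <= -2 by apply: (even_le2 _ e1); rewrite subr_lt0.
    have := sq_strict h1 h2.
    have -> : dgT a i - 2 - z i ord0 = dgT a i - z i ord0 - 2 by ring.
    by have -> : dgT b i + 2 - z i ord0 = dgT b i - z i ord0 + 2 by ring.
  apply: ler_sum => v _; rewrite dga' dgb'.
  have -> : dgT a v - dW v - z v ord0 = dgT a v - z v ord0 - dW v by ring.
  have -> : dgT b v + dW v - z v ord0 = dgT b v - z v ord0 + dW v by ring.
  apply: sq_step.
  have -> : dgT a v - z v ord0 - (dgT b v - z v ord0) = dgT a v - dgT b v by ring.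
  by have [_ hd] := dWb v.
exists la'; split.
  split; [|split; [|split]].
  - move=> s; rewrite /la'; apply: addr_ge0; last first.
      by apply: mulr_ge0; [exact: ltW | apply: addr_ge0; rewrite ler0n].
    case: (eqVneq s a) => [->|sa]; first by rewrite ?eqxx ?(negbTE ab) /= addr0 mulr1 subr_ge0.
    case: (eqVneq s b) => [->|sb]; first by rewrite ?eqxx /= add0r mulr1 subr_ge0.
    by rewrite /= addr0 mulr0 subr0.
  - move=> s nok; rewrite /la' (lok _ nok).
    have nx : forall t, okT t -> (s == t) = false.
      by move=> t ot; apply/negbTE/eqP => e; move: nok; rewrite e ot.
    by rewrite !nx // !addr0 mulr0 subr0 add0r.
  - have h := sumE (fun _ => 1).
    have e1 : forall f : TT -> R, \sum_s f s * 1 = \sum_s f s.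
      by move=> f; apply: eq_bigr => s _; rewrite mulr1.
    by rewrite !e1 in h; rewrite h lsum; ring.
  - case => [v|] /=.
      rewrite sumE rowdeg -!intrD dga' dgb'.
      have -> : dgT a v - dW v + (dgT b v + dW v) = dgT a v + dgT b v by ring.
      ring.
    by rewrite sumE rowc -!intrD cTlin; ring.
rewrite /Phi sumE -/(Phi gT la).
have : mu * (gT a' + gT b') < mu * (gT a + gT b) by rewrite ltr_pM2l.
lra.
Qed.

Definition colT (s : TT) : 'cV[int]_n := \col_j vT s j.

Lemma mulM_col (x : 'cV[int]_n) v : (M *m x) v 0 = degM M (fun j => x j 0) v.
Proof. by rewrite !mxE. Qed.

Lemma cost_col (x : 'cV[int]_n) : (c^T *m x) 0 0 = \sum_j c j 0 * x j 0.
Proof. by rewrite !mxE; apply: eq_bigr => j _; rewrite mxE. Qed.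

Lemma colT_feas (s : TT) (y : 'cV[int]_m) : (forall v, dgT s v = y v ord0) ->
  M *m colT s = y /\ forall j, 0 <= colT s j 0.
Proof.
move=> h; split; last by move=> j; rewrite mxE.
apply/matrixP => v k; rewrite (ord1 k) mulM_col -h /dgT /degM.
by apply: eq_bigr => j _; rewrite mxE.
Qed.

Lemma colT_cost (s : TT) : (c^T *m colT s) 0 0 = cT s.
Proof. by rewrite cost_col; apply: eq_bigr => j _; rewrite mxE. Qed.

Lemma fcM_le (y : 'cV[int]_m) (s : TT) : (forall v, dgT s v = y v ord0) ->
  (fcM R c M y <= ((cT s)%:~R)%:E)%E.
Proof.
move=> h; apply: ge_ereal_inf; exists ((cT s)%:~R)%:E => //.
by exists (colT s); [exact: colT_feas | rewrite colT_cost].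
Qed.

Lemma fcM_inf (y : 'cV[int]_m) :
  ~ (exists x : 'cV[int]_n, M *m x = y /\ forall j, 0 <= x j 0) -> fcM R c M y = +oo%E.
Proof.
move=> H; apply/ereal_inf_pinfty => e [x hx _]; exfalso; apply: H; by exists x.
Qed.

Lemma ord0E : (0 : 'I_1) = ord0. Proof. by apply/val_inj. Qed.

Lemma feas_toT (y : 'cV[int]_m) (x : 'cV[int]_n) : (forall v, y v ord0 <= D%:Z) ->
  M *m x = y -> (forall j, 0 <= x j 0) ->
  exists s : TT, (forall v, dgT s v = y v ord0) /\ cT s = (c^T *m x) 0 0.
Proof.
move=> yD hx x0.
have xD : forall v, degM M (fun j => x j 0) v <= D%:Z.
  by move=> v; rewrite -mulM_col hx ord0E; exact: yD.
have [s hs] := @toT (fun j => x j 0) x0 xD.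
exists s; split.
  move=> v; rewrite -ord0E -hx mulM_col /dgT /degM; apply: eq_bigr => j _; by rewrite hs.
by rewrite cost_col /cT; apply: eq_bigr => j _; rewrite hs.
Qed.

Lemma fcM_min (y : 'cV[int]_m) : (forall v, y v ord0 <= D%:Z) ->
  (exists x : 'cV[int]_n, M *m x = y /\ forall j, 0 <= x j 0) ->
  exists s : TT, (forall v, dgT s v = y v ord0) /\ fcM R c M y = ((cT s)%:~R)%:E.
Proof.
move=> yD [x [hx x0]].
have [s0 [hs0 _]] := feas_toT yD hx x0.
pose P := [pred s : TT | [forall v, dgT s v == y v ord0]].
have Ps0 : P s0 by apply/forallP => v; rewrite hs0.
case: (@arg_minP _ _ _ s0 P cT Ps0) => s Ps mins.
have hs : forall v, dgT s v = y v ord0 by move=> v; apply/eqP; move/forallP: Ps; apply.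
exists s; split => //; apply/eqP; rewrite eq_le (fcM_le hs) /=.
apply: le_ereal_inf_tmp => e [x' [hx' x0'] <-].
have [s' [hs' cs']] := feas_toT yD hx' x0'.
rewrite -cs' lee_fin ler_int; apply: mins; apply/forallP => v; by rewrite hs'.
Qed.

Lemma main_sec (l : nat) (zs : 'I_l -> 'cV[int]_m) (lam : 'I_l -> R) :
  (forall k v, (zs k v ord0 == r v ord0 %[mod 2])%Z) ->
  (forall k v, zs k v ord0 <= D%:Z) ->
  (forall k, 0 <= lam k) -> \sum_k lam k = 1 ->
  (forall v, (z v ord0)%:~R = \sum_k lam k * (zs k v ord0)%:~R :> R) ->
  (fcM R c M z <= \sum_k (lam k)%:E * fcM R c M (zs k))%E.
Proof.
move=> zsr zsD lam0 lsum zdef.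
have okdeg : forall s k, (forall v, dgT s v = zs k v ord0) -> okT s.
  by move=> s k h; apply/forallP => v; rewrite h zsD zsr.
have posl : forall k, lam k != 0 -> 0 < lam k.
  by move=> k lk; rewrite lt_neqAle eq_sym lk lam0.
case: (pselect (exists k, 0 < lam k /\
   ~ (exists x : 'cV[int]_n, M *m x = zs k /\ forall j, 0 <= x j 0))) => [[k [lk nf]]|allf].
  suff -> : (\sum_k (lam k)%:E * fcM R c M (zs k) = +oo)%E by rewrite leey.
  apply/eqP; rewrite esum_eqy.
    apply/existsP; exists k; by rewrite /= fcM_inf // mulry gtr0_sg // mul1e.
  move=> k' _; case: (eqVneq (lam k') 0) => [->|lk']; first by rewrite mul0e.
  case: (pselect (exists x : 'cV[int]_n, M *m x = zs k' /\ forall j, 0 <= x j 0)) => [f|nf'].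
    by have [s [_ ->]] := fcM_min (zsD k') f.
  by rewrite fcM_inf // mulry gtr0_sg ?posl // mul1e.
have feasl : forall k, 0 < lam k -> exists x : 'cV[int]_n, M *m x = zs k /\ forall j, 0 <= x j 0.
  move=> k lk; case: (pselect (exists x : 'cV[int]_n, M *m x = zs k /\ forall j, 0 <= x j 0)) => // nf.
  by exfalso; apply: allf; exists k.
have [k1 lk1] : exists k, 0 < lam k.
  case: (pselect (exists k, 0 < lam k)) => // H; exfalso.
  have : \sum_k lam k = 0.
    apply: big1 => k _; apply/eqP; apply/negPn/negP => h; apply: H; exists k; exact: posl.
  by rewrite lsum => /eqP; rewrite oner_eq0.
have [s1 [hs1 _]] := fcM_min (zsD k1) (feasl k1 lk1).
have ok1 : okT s1 := okdeg s1 k1 hs1.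
have HX : forall k, exists s : TT, okT s /\ (0 < lam k ->
    (forall v, dgT s v = zs k v ord0) /\ fcM R c M (zs k) = ((cT s)%:~R)%:E).
  move=> k; case: (ltP 0 (lam k)) => lk.
    have [s [hs e]] := fcM_min (zsD k) (feasl k lk).
    by exists s; split; [exact: okdeg hs | by []].
  by exists s1; split => // h; exfalso; move: lk; rewrite leNgt h.
have [X hX] := choice HX.
pose C0 := \sum_k lam k * (cT (X k))%:~R.
have -> : (\sum_k (lam k)%:E * fcM R c M (zs k) = C0%:E)%E.
  rewrite /C0 -sumEFin; apply: eq_bigr => k _.
  case: (eqVneq (lam k) 0) => [->|lk]; first by rewrite mul0e mul0r.
  have [_ /(_ (posl _ lk)) [_ ->]] := hX k; by rewrite EFinM.
pose la0 (s : TT) := \sum_(k | X k == s) lam k.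
have sumX : forall F : TT -> R, \sum_s la0 s * F s = \sum_k lam k * F (X k).
  move=> F; rewrite (partition_big X predT) //=; apply: eq_bigr => s _.
  rewrite /la0 mulr_suml; apply: eq_bigr => k /eqP -> //.
have e1 : forall (I : finType) (f : I -> R), \sum_s f s * 1 = \sum_s f s.
  by move=> I f; apply: eq_bigr => s _; rewrite mulr1.
have fl0 : feas rowT (rhsT C0) okT la0.
  split; [|split; [|split]].
  - by move=> s; apply: sumr_ge0 => k _; exact: lam0.
  - move=> s nok; apply: big1 => k /eqP e; exfalso; move: nok; rewrite -e.
    by case: (hX k) => ->.
  - by have := sumX (fun _ => 1); rewrite !e1 lsum.
  - case => [v|] /=; last by rewrite sumX.
    rewrite sumX (zdef v); apply: eq_bigr => k _.
    case: (eqVneq (lam k) 0) => [->|lk]; first by rewrite !mul0r.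
    by have [_ /(_ (posl _ lk)) [-> _]] := hX k.
have [la [fla phi]] := descent (step (C0:=C0)) fl0.
case: (fla) => la00 [lok [lsum' lrow]].
have rc : \sum_s la s * (cT s)%:~R = C0 := lrow None.
have laP : forall s, la s != 0 -> 0 < la s.
  by move=> s ls; rewrite lt_neqAle eq_sym ls la00.
have g0 : forall s, 0 <= gT s.
  by move=> s; rewrite /gT ler0z; apply: sumr_ge0 => v _; rewrite sqr_ge0.
have gs0 : forall s, 0 < la s -> gT s = 0.
  move=> s ls.
  have t0 : forall s, 0 <= la s * gT s by move=> s'; apply: mulr_ge0.
  have P0 : Phi gT la = 0 by apply/eqP; rewrite eq_le phi sumr_ge0.
  have := psumr_eq0P (fun s _ => t0 s) P0 (i:=s) isT.
  by move/eqP; rewrite mulf_eq0 (gt_eqF ls) /= => /eqP.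
have deg_z : forall s, gT s = 0 -> forall v, dgT s v = z v ord0.
  move=> s; rewrite /gT => /eqP; rewrite intr_eq0 => /eqP hs v.
  have sq0 : forall v, 0 <= (dgT s v - z v ord0) ^+ 2 by move=> v'; rewrite sqr_ge0.
  have := psumr_eq0P (fun v _ => sq0 v) hs (i:=v) isT.
  by move/eqP; rewrite sqrf_eq0 subr_eq0 => /eqP.
have [s2 ls2] : exists s, 0 < la s.
  case: (pselect (exists s, 0 < la s)) => // H; exfalso.
  have : \sum_s la s = 0.
    apply: big1 => s _; apply/eqP; apply/negPn/negP => h; apply: H; exists s; exact: laP.
  by rewrite lsum' => /eqP; rewrite oner_eq0.
have [s [ls cs]] : exists s, 0 < la s /\ (cT s)%:~R <= C0.
  case: (pselect (exists s, 0 < la s /\ (cT s)%:~R <= C0)) => // H; exfalso.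
  have hsum : \sum_s la s * ((cT s)%:~R - C0) = 0.
    under eq_bigr do rewrite mulrBr.
    by rewrite sumrB rc -mulr_suml lsum' mul1r subrr.
  have nonneg : forall s, 0 <= la s * ((cT s)%:~R - C0).
    move=> s; case: (eqVneq (la s) 0) => [->|ls]; first by rewrite mul0r.
    apply: mulr_ge0; first exact: ltW (laP _ ls).
    rewrite subr_ge0; apply: ltW; rewrite ltNge; apply/negP => h; apply: H; exists s.
    by split => //; exact: laP.
  have := psumr_eq0P (fun s _ => nonneg s) hsum (i:=s2) isT.
  move/eqP; rewrite mulf_eq0 (gt_eqF ls2) /= subr_eq0 => /eqP e.
  by apply: H; exists s2; rewrite e lexx.
apply: le_trans (fcM_le (deg_z s (gs0 s ls))) _; by rewrite lee_fin.
Qed.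

End Main.



End LemmaSevenProof.
Import LemmaSevenProof.

Theorem lemma7 (R : realType) (m n l : nat) (M : 'M[int]_(m, n))
  (c : 'cV[int]_n) (r : 'cV[int]_m) (zs : 'I_l -> 'cV[int]_m)
  (lam : 'I_l -> R) (z : 'cV[int]_m) :
  is_simple_incidence_matrix M ->
  (forall k i, ((zs k i ord0) = (r i ord0) %[mod 2%Z])%Z) ->
  (forall k, 0 <= lam k) ->
  \sum_(k < l) lam k = 1 ->
  (forall i, (z i 0)%:~R = \sum_(k < l) lam k * (zs k i 0)%:~R :> R) ->
  (forall i, ((z i ord0) = (r i ord0) %[mod 2%Z])%Z) ->
  (fcM R c M z <= \sum_(k < l) (lam k)%:E * fcM R c M (zs k))%E.
Proof.
move=> [M01 [Msum _]] zsr lam0 lsum zdef zr.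
have [u [w Mdef]] : exists u w : 'I_n -> 'I_m,
    forall v j, M v j = (u j == v)%:R + (w j == v)%:R.
  have H : forall j, exists p : 'I_m * 'I_m,
      forall v, M v j = (p.1 == v)%:R + (p.2 == v)%:R.
    move=> j; pose A := [set v | M v j == 1].
    have MA : forall v, M v j = (v \in A)%:R.
      by move=> v; rewrite inE; case: (M01 v j) => ->.
    have cA : #|A| == 2%N.
      have e : \sum_(v < m) M v j = \sum_(v < m) ((v \in A)%:R : int).
        by apply: eq_bigr => v _; rewrite MA.
      have := Msum j; rewrite e.
      have -> : \sum_(v < m) ((v \in A)%:R : int) = #|A|%:R.
        rewrite -sumr_const [RHS]big_mkcond /=; apply: eq_bigr => v _; by case: (v \in A).
      by rewrite natz => -[->].
    case/cards2P: cA => x [y [xy eA]].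
    exists (x, y) => v; rewrite MA eA !inE /=.
    rewrite (eq_sym x) (eq_sym y).
    have nxy : ~~ ((v == x) && (v == y)).
      by apply/andP => -[/eqP a /eqP b]; move: xy; rewrite -a -b eqxx.
    by move: nxy; case: (v == x); case: (v == y).
  have [f hf] := choice H.
  by exists (fun j => (f j).1), (fun j => (f j).2) => v j; exact: hf.
pose D := \max_(k < l) \max_(v < m) `|zs k v ord0|%N.
have zsD : forall k v, zs k v ord0 <= D%:Z.
  move=> k v; apply: le_trans (ler_norm _) _; rewrite -abszE lez_nat.
  apply: leq_trans (leq_bigmax (F := fun k => \max_(v < m) `|zs k v ord0|%N) k).
  exact: (leq_bigmax (F := fun v => `|zs k v ord0|%N) v).
apply: (@main_sec R m n M c r z D u w Mdef).
- by move=> v; apply/eqP; exact: zr.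
- by move=> k v; apply/eqP; exact: zsr.
- exact: zsD.
- exact: lam0.
- exact: lsum.
- by move=> v; rewrite -ord0E; exact: zdef.
Qed.
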